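(* Let $z\in\mathbb{R}$ and $\tau\in\mathcal{L}$ with $C(\tau)=\{z\}$. Then $(\mathbb{R},\tau)$ is second countable if and only if the point $z$ has a countable local base in $(\mathbb{R},\tau)$; and $(\mathbb{R},\tau)$ is completely normal if and only if it is regular.
   Context: $\eta$ denotes the Euclidean topology on $\mathbb{R}$. $\mathcal{L}$ denotes the family of all Hausdorff topologies $\tau$ on $\mathbb{R}$ with $\tau\subset\eta$. For $\tau\in\mathcal{L}$ and $a\in\mathbb{R}$ let $\mathcal{N}_\tau(a)$ be the neighborhood filter of $a$ in $(\mathbb{R},\tau)$; $C(\tau)$ is the set of all $a\in\mathbb{R}$ with $\mathcal{N}_\tau(a)\neq\mathcal{N}_\eta(a)$. *)

(* Defs.v *)
From Stdlib Require Import Reals.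
Open Scope R_scope.

Definition subset (A B : R -> Prop) : Prop := forall x, A x -> B x.

Definition is_topology (tau : (R -> Prop) -> Prop) : Prop :=
  tau (fun _ => False) /\ tau (fun _ => True) /\
  (forall U V, tau U -> tau V -> tau (fun x => U x /\ V x)) /\
  (forall F : (R -> Prop) -> Prop, (forall U, F U -> tau U) ->
     tau (fun x => exists U, F U /\ U x)).

Definition eta (U : R -> Prop) : Prop :=
  forall x, U x -> exists e, 0 < e /\ forall y, Rabs (y - x) < e -> U y.

Definition hausdorff (tau : (R -> Prop) -> Prop) : Prop :=
  forall x y, x <> y -> exists U V, tau U /\ tau V /\ U x /\ V y /\
    (forall w, U w -> V w -> False).

Definition in_L (tau : (R -> Prop) -> Prop) : Prop :=
  is_topology tau /\ hausdorff tau /\ (forall U, tau U -> eta U).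

Definition nbhd (tau : (R -> Prop) -> Prop) (a : R) (N : R -> Prop) : Prop :=
  exists U, tau U /\ U a /\ subset U N.

Definition Cset (tau : (R -> Prop) -> Prop) (a : R) : Prop :=
  ~ (forall N, nbhd tau a N <-> nbhd eta a N).

(* second countable: a countable base (indexed by nat; repetitions allowed) *)
Definition second_countable (tau : (R -> Prop) -> Prop) : Prop :=
  exists B : nat -> (R -> Prop), (forall n, tau (B n)) /\
    (forall U, tau U -> forall x, U x -> exists n, B n x /\ subset (B n) U).

Definition countable_local_base (tau : (R -> Prop) -> Prop) (z : R) : Prop :=
  exists B : nat -> (R -> Prop), (forall n, nbhd tau z (B n)) /\
    (forall N, nbhd tau z N -> exists n, subset (B n) N).

Definition closure (tau : (R -> Prop) -> Prop) (A : R -> Prop) (x : R) : Prop :=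
  forall U, tau U -> U x -> exists y, U y /\ A y.

Definition closed (tau : (R -> Prop) -> Prop) (F : R -> Prop) : Prop :=
  tau (fun x => ~ F x).

Definition regular (tau : (R -> Prop) -> Prop) : Prop :=
  forall F x, closed tau F -> ~ F x ->
    exists U V, tau U /\ tau V /\ U x /\ subset F V /\
      (forall w, U w -> V w -> False).

Definition completely_normal (tau : (R -> Prop) -> Prop) : Prop :=
  forall A B : R -> Prop,
    (forall x, closure tau A x -> B x -> False) ->
    (forall x, A x -> closure tau B x -> False) ->
    exists U V, tau U /\ tau V /\ subset A U /\ subset B V /\
      (forall w, U w -> V w -> False).

(* Main.v *)
Require Import Defs.
From Stdlib Require Import Reals.
From Stdlib Require Import Lra Lia ZArith Classical FunctionalExtensionality PropExtensionality.
From Stdlib Require Cantor.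
Open Scope R_scope.

Lemma tau_ext (tau : (R -> Prop) -> Prop) (P Q : R -> Prop) :
  tau P -> (forall x, P x <-> Q x) -> tau Q.
Proof.
  intros H E. replace Q with P; auto.
  apply functional_extensionality; intro x; apply propositional_extensionality; auto.
Qed.

Lemma open_local (tau : (R -> Prop) -> Prop) (W : R -> Prop) : is_topology tau ->
  (forall y, W y -> exists U, tau U /\ U y /\ subset U W) -> tau W.
Proof.
  intros [_ [_ [_ Hu]]] H.
  apply tau_ext with (fun x => exists U, (tau U /\ subset U W) /\ U x).
  - apply Hu. intros U [? ?]; auto.
  - intro x; split.
    + intros [U [[_ HU] Ux]]; auto.
    + intro Wx. destruct (H x Wx) as [U [tU [Ux sU]]]. exists U; auto.
Qed.

Lemma open_union (tau : (R -> Prop) -> Prop) U V : is_topology tau -> tau U -> tau V ->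
  tau (fun x => U x \/ V x).
Proof.
  intros T HU HV. apply open_local; auto.
  intros y [Uy|Vy]; [exists U|exists V]; repeat split; auto; unfold subset; auto.
Qed.

Lemma tri a b c : Rabs (a - c) <= Rabs (a - b) + Rabs (b - c).
Proof. replace (a - c) with ((a - b) + (b - c)) by ring. apply Rabs_triang. Qed.

Lemma eta_open_noz z tau : in_L tau -> (forall a, Cset tau a <-> a = z) ->
  forall W, eta W -> ~ W z -> tau W.
Proof.
  intros [T _] HC W HW Wz. apply open_local; auto. intros y Wy.
  assert (Hyz : y <> z) by (intro; subst; contradiction).
  assert (Hn: ~ Cset tau y) by (intro Hc; apply HC in Hc; contradiction).
  unfold Cset in Hn. apply NNPP in Hn.
  assert (Hnb : nbhd eta y W) by (exists W; repeat split; auto; unfold subset; auto).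
  apply Hn in Hnb. destruct Hnb as [U [? [? ?]]]. exists U; auto.
Qed.

Lemma eta_noz z W : eta W -> eta (fun y => W y /\ y <> z).
Proof.
  intros HW y [Wy yz]. destruct (HW y Wy) as [e [He Hb]].
  assert (Hd : 0 < Rabs (y - z)) by (apply Rabs_pos_lt; lra).
  exists (Rmin e (Rabs (y - z))). split.
  - apply Rmin_pos; auto.
  - intros w Hw. pose proof (Rmin_l e (Rabs (y - z))). pose proof (Rmin_r e (Rabs (y - z))).
    split. apply Hb; lra.
    intro; subst. rewrite Rabs_minus_sym in Hw. lra.
Qed.

Lemma sc_clb tau z : is_topology tau -> second_countable tau -> countable_local_base tau z.
Proof.
  intros T [B [HB Hbase]].
  exists (fun n x => (B n z /\ B n x) \/ (~ B n z)).
  split.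
  - intro n. destruct (classic (B n z)) as [Hz|Hz].
    + exists (B n). repeat split; auto. intros x Hx; left; auto.
    + exists (fun _ => True). destruct T as [_ [Ht _]]. repeat split; auto.
      intros x _; right; auto.
  - intros N [U [tU [Uz sU]]]. destruct (Hbase U tU z Uz) as [n [Bz sB]].
    exists n. intros x [[_ Bx]|nz]; [apply sU, sB; auto | contradiction].
Qed.

Definition Int (tau : (R -> Prop) -> Prop) (N : R -> Prop) : R -> Prop :=
  fun y => exists V, tau V /\ V y /\ subset V N.

Definition Dint (z : R) (m : nat) (k : Z) : R -> Prop :=
  fun y => Rabs (y - IZR k / INR (S m)) < 2 / INR (S m) /\
           ~ (Rabs (z - IZR k / INR (S m)) < 2 / INR (S m)).

Lemma Dint_eta z m k : eta (Dint z m k).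
Proof.
  intros y [Hy Hz]. exists (2 / INR (S m) - Rabs (y - IZR k / INR (S m))).
  split; [lra|]. intros w Hw. split; auto.
  pose proof (tri w y (IZR k / INR (S m))). lra.
Qed.

Lemma Dint_cover z x e : x <> z -> 0 < e ->
  exists m k, Dint z m k x /\ forall y, Dint z m k y -> Rabs (y - x) < e.
Proof.
  intros xz He.
  assert (Hd0 : 0 < Rabs (x - z)) by (apply Rabs_pos_lt; lra).
  set (d := Rmin e (Rabs (x - z))).
  assert (Hd : 0 < d) by (apply Rmin_pos; auto).
  pose proof (Rmin_l e (Rabs (x - z))). pose proof (Rmin_r e (Rabs (x - z))).
  destruct (archimed_cor1 (d / 3)) as [N [HN1 HN2]]; [lra|].
  destruct N as [|m]; [lia|].
  set (n := INR (S m)).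
  assert (Hn : 0 < n) by (apply lt_0_INR; lia).
  set (h := / n).
  assert (Hh : 0 < h) by (apply Rinv_0_lt_compat; auto).
  assert (Hnh : n * h = 1) by (unfold h; field; lra).
  fold n h in HN1. unfold d in HN1, Hd.
  destruct (archimed (x * n)) as [A1 A2].
  set (k := (up (x * n) - 1)%Z).
  assert (Hk : IZR k = IZR (up (x * n)) - 1) by (unfold k; rewrite minus_IZR; auto).
  assert (E : x - IZR k / n = (x * n - IZR k) * h).
  { unfold Rdiv. fold h. replace x with (x * (n * h)) at 1 by (rewrite Hnh; ring). ring. }
  assert (L1 : 0 <= x - IZR k / n).
  { rewrite E. apply Rmult_le_pos; lra. }
  assert (L2 : x - IZR k / n < h).
  { rewrite E. assert (x * n - IZR k < 1) by lra. nra. }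
  assert (Hr : 2 / n = 2 * h) by (unfold h, Rdiv; ring).
  exists m, k. unfold Dint. fold n. rewrite Hr.
  assert (Rabs (x - IZR k / n) < h) by (rewrite Rabs_right; lra).
  split; [split|].
  - lra.
  - intro Hc. pose proof (tri x (IZR k / n) z).
    rewrite (Rabs_minus_sym (IZR k / n) z) in H2. lra.
  - intros y [Hy _]. pose proof (tri y (IZR k / n) x).
    rewrite (Rabs_minus_sym (IZR k / n) x) in H2. lra.
Qed.

Definition dec (n : nat) : nat * nat * Z :=
  let (a, p) := Cantor.of_nat n in
  let (m, q) := Cantor.of_nat p in
  let (i, j) := Cantor.of_nat q in (a, m, (Z.of_nat i - Z.of_nat j)%Z).

Lemma dec_surj a m k : exists n, dec n = (a, m, k).
Proof.
  exists (Cantor.to_nat (a, Cantor.to_nat (m, Cantor.to_nat (Z.to_nat k, Z.to_nat (- k))))).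
  unfold dec. rewrite !Cantor.cancel_of_to. f_equal. lia.
Qed.

Lemma clb_sc z tau : in_L tau -> (forall a, Cset tau a <-> a = z) ->
  countable_local_base tau z -> second_countable tau.
Proof.
  intros HL HC [LB [HLB1 HLB2]]. pose proof HL as [T [_ Heta]].
  exists (fun n => match dec n with (0%nat, m, _) => Int tau (LB m) | (S _, m, k) => Dint z m k end).
  split.
  - intro n. destruct (dec n) as [[a m] k]. destruct a.
    + apply open_local; auto. intros y [V [tV [Vy sV]]]. exists V; repeat split; auto.
      intros w Vw. exists V; auto.
    + apply (eta_open_noz z); auto. apply Dint_eta. intros [H1 H2]; auto.
  - intros U tU x Ux. destruct (Req_dec x z) as [xz|xz].
    + subst. destruct (HLB2 U) as [m Hm].
      { exists U; repeat split; auto; unfold subset; auto. }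
      destruct (dec_surj 0 m 0%Z) as [n Hn]. exists n. rewrite Hn. split.
      * apply HLB1.
      * intros w [V [_ [Vw sV]]]. apply Hm, sV; auto.
    + destruct (Heta U tU x Ux) as [e [He Hb]].
      destruct (Dint_cover z x e xz He) as [m [k [Dx Hcov]]].
      destruct (dec_surj 1 m k) as [n Hn]. exists n. rewrite Hn. split; auto.
      intros y Dy. apply Hb, Hcov; auto.
Qed.

Lemma not_closure tau B a : ~ closure tau B a ->
  exists U, tau U /\ U a /\ forall y, U y -> ~ B y.
Proof.
  intro H.
  destruct (classic (exists U, tau U /\ U a /\ forall y, U y -> ~ B y)) as [|Hn]; auto.
  exfalso; apply H; intros U tU Ua. apply NNPP; intro Hno. apply Hn; exists U; repeat split; auto.
  intros y Uy By; apply Hno; exists y; auto.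
Qed.

Lemma sub_closure tau W y : W y -> closure tau W y.
Proof. intros Wy U _ Uy; exists y; auto. Qed.

Lemma compl_closure_open tau W : is_topology tau -> tau (fun y => ~ closure tau W y).
Proof.
  intros T. apply open_local; auto. intros y Hy.
  destruct (not_closure tau W y Hy) as [U [tU [Uy HU]]].
  exists U; repeat split; auto. intros u Uu Hcl.
  destruct (Hcl U tU Uu) as [w [Uw Ww]]. apply (HU w Uw Ww).
Qed.

Lemma cn_reg tau : in_L tau -> completely_normal tau -> regular tau.
Proof.
  intros [T [Hh _]] Hcn F x HF Fx.
  destruct (Hcn (fun y => y = x) F) as [U [V [tU [tV [sA [sB disj]]]]]].
  - intros y Hcl Fy. assert (Hyx : y <> x) by (intro; subst; contradiction).
    destruct (Hh y x Hyx) as [U1 [V1 [tU1 [_ [U1y [V1x d]]]]]].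
    destruct (Hcl U1 tU1 U1y) as [w [U1w wx]]. subst. apply (d x U1w V1x).
  - intros y yx Hcl. subst. destruct (Hcl _ HF Fx) as [w [nF Fw]]. contradiction.
  - exists U, V. repeat split; auto; try (apply sA; reflexivity).
Qed.

Definition U0 (A B : R -> Prop) : R -> Prop :=
  fun y => exists a, A a /\ exists r, 0 < r /\ (forall w, Rabs (w - a) < r -> ~ B w) /\
     Rabs (y - a) < r / 2.

Lemma U0_eta A B : eta (U0 A B).
Proof.
  intros y [a [Aa [r [Hr [Hb Hy]]]]]. exists (r / 2 - Rabs (y - a)). split; [lra|].
  intros w Hw. exists a; split; auto. exists r; repeat split; auto.
  pose proof (tri w y a). lra.
Qed.

Lemma U0_disj A B y : A = A -> U0 A B y -> U0 B A y -> False.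
Proof.
  intros _ [a [Aa [r [Hr [Hb Hy]]]]] [b [Bb [s [Hs [Ha Hy']]]]].
  pose proof (tri a y b). rewrite (Rabs_minus_sym a y) in H.
  destruct (Rle_dec s r).
  - apply (Hb b); auto. rewrite Rabs_minus_sym. lra.
  - apply (Ha a); auto. lra.
Qed.

Lemma U0_cover tau A B a : (forall U, tau U -> eta U) -> A a -> ~ closure tau B a -> U0 A B a.
Proof.
  intros Heta Aa Hc. destruct (not_closure tau B a Hc) as [U [tU [Ua HU]]].
  destruct (Heta U tU a Ua) as [e [He Hb]].
  exists a; split; auto. exists e; repeat split; auto.
  replace (a - a) with 0 by ring. rewrite Rabs_R0. lra.
Qed.

Lemma G z tau (A B W' : R -> Prop) : in_L tau -> (forall a, Cset tau a <-> a = z) ->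
  (forall x, closure tau A x -> B x -> False) ->
  (forall x, A x -> closure tau B x -> False) ->
  ~ B z -> tau W' -> (A z -> W' z) -> (forall y, closure tau W' y -> ~ B y) ->
  exists U V, tau U /\ tau V /\ subset A U /\ subset B V /\
      (forall w, U w -> V w -> False).
Proof.
  intros HL HC H1 H2 Bz tW' AW' HW'.
  pose proof HL as [T [_ Heta]].
  exists (fun y => W' y \/ (U0 A B y /\ y <> z)),
         (fun y => (U0 B A y /\ y <> z) /\ ~ closure tau W' y).
  split; [|split; [|split; [|split]]].
  - apply open_union; auto. apply (eta_open_noz z); auto. apply eta_noz, U0_eta.
    intros [_ zz]; auto.
  - apply (proj1 (proj2 (proj2 T))).
    + apply (eta_open_noz z); auto. apply eta_noz, U0_eta. intros [_ zz]; auto.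
    + apply compl_closure_open; auto.
  - intros a Aa. destruct (Req_dec a z) as [az|az].
    + subst; left; auto.
    + right; split; auto. apply (U0_cover tau); auto. intro; eapply H2; eauto.
  - intros b Bb. split; [split|].
    + apply (U0_cover tau); auto. intro; eapply H1; eauto.
    + intro; subst; contradiction.
    + intro Hc. apply (HW' b Hc Bb).
  - intros w [Ww|[Uw _]] [[Vw _] Hc].
    + apply Hc, sub_closure; auto.
    + apply (U0_disj A B w eq_refl Uw Vw).
Qed.

Lemma reg_shrink tau W x : is_topology tau -> regular tau -> tau W -> W x ->
  exists W', tau W' /\ W' x /\ forall y, closure tau W' y -> W y.
Proof.
  intros T Hreg tW Wx.
  destruct (Hreg (fun y => ~ W y) x) as [U [V [tU [tV [Ux [sF disj]]]]]].
  - unfold closed. apply tau_ext with W; auto. intro y; split; auto. apply NNPP.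
  - auto.
  - exists U; repeat split; auto. intros y Hcl. apply NNPP; intro nW.
    destruct (Hcl V tV (sF y nW)) as [w [Vw Uw]]. apply (disj w Uw Vw).
Qed.

Lemma G' z tau (A B : R -> Prop) : in_L tau -> (forall a, Cset tau a <-> a = z) -> regular tau ->
  (forall x, closure tau A x -> B x -> False) ->
  (forall x, A x -> closure tau B x -> False) ->
  ~ closure tau B z ->
  exists U V, tau U /\ tau V /\ subset A U /\ subset B V /\
      (forall w, U w -> V w -> False).
Proof.
  intros HL HC Hreg H1 H2 HBz. pose proof HL as [T _].
  destruct (not_closure tau B z HBz) as [W [tW [Wz HW]]].
  destruct (reg_shrink tau W z T Hreg tW Wz) as [W' [tW' [W'z HW']]].
  apply (G z tau A B W'); auto.
Qed.

Lemma reg_cn z tau : in_L tau -> (forall a, Cset tau a <-> a = z) -> regular tau ->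
  completely_normal tau.
Proof.
  intros HL HC Hreg A B H1 H2. pose proof HL as [T _].
  destruct (classic (closure tau B z)) as [HBz|HBz].
  2: { apply (G' z tau A B); auto. }
  assert (Az : ~ A z) by (intro; eapply H2; eauto).
  destruct (classic (closure tau A z)) as [HAz|HAz].
  - assert (Bz : ~ B z) by (intro; eapply H1; eauto).
    apply (G z tau A B (fun _ => False)); auto.
    + apply (proj1 T).
    + intros y Hc. destruct (Hc (fun _ => True)) as [w [_ F]]; auto.
      apply (proj1 (proj2 T)).
  - destruct (G' z tau B A) as [V [U [tV [tU [sB [sA d]]]]]]; auto.
    + intros x Hx Ax; eapply H2; eauto.
    + intros x Bx Hx; eapply H1; eauto.
    + exists U, V; repeat split; auto. intros w Uw Vw; apply (d w Vw Uw).
Qed.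

Theorem lemma4 (z : R) (tau : (R -> Prop) -> Prop) :
  in_L tau ->
  (forall a, Cset tau a <-> a = z) ->
  ((second_countable tau <-> countable_local_base tau z) /\
   (completely_normal tau <-> regular tau)).
Proof.
  intros HL HC. split; split.
  - apply sc_clb. apply (proj1 HL).
  - apply (clb_sc z); auto.
  - apply cn_reg; auto.
  - apply (reg_cn z); auto.
Qed.
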